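(* Let $m,n$ be non-negative integers. For $y\in\mathbb{R}$ define \[ R_{m,n}(y)=\int_{-1}^1P_n(x)\,P_{n+m}(x+y)\,dx . \] Then \[ R_{m,n}(y)=\dfrac{\Gamma\left(m+n+\frac{1}{2}\right)}{\Gamma(m+1)\Gamma\left(n+\frac{3}{2}\right)}(2y)^m\ {}_4F_3\left(\begin{array}{c}-\frac{m}{2},\frac{1-m}{2},\frac{1-m}{2},\frac{2-m}{2}\\ 1-m,\ \frac{1}{2}-m-n,\ n+\frac{3}{2}\end{array};\dfrac{4}{y^2}\right). \]
   Context: $P_n$ is the Legendre polynomial ($P_0=1$, $P_1(x)=x$, $(n+1)P_{n+1}(x)=(2n+1)xP_n(x)-nP_{n-1}(x)$). ${}_4F_3$ is the generalized hypergeometric series $\sum_k\frac{(a_1)_k\cdots(a_4)_k}{(b_1)_k(b_2)_k(b_3)_k}\frac{z^k}{k!}$ with $(a)_k$ the Pochhammer symbol; here it terminates (at the first upper parameter that is a non-positive integer), so $y^m\,{}_4F_3(\dots;4/y^2)$ is a polynomial in $y$ and the right-hand side is understood as this polynomial. *)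

(* Defs.v *)
From Stdlib Require Import Reals Lra Lia.
From Coquelicot Require Import Coquelicot.
Open Scope R_scope.

(* Legendre polynomials via the three-term recurrence:
   P_0 = 1, P_1 = x, (n+1) P_{n+1} = (2n+1) x P_n - n P_{n-1}. *)
Fixpoint legendre_pair (n : nat) (x : R) : R * R :=
  (* returns (P_n x, P_{n+1} x) *)
  match n with
  | O => (1, x)
  | S k => let (p, q) := legendre_pair k x in
           (q, ((2 * INR k + 3) * x * q - (INR k + 1) * p) / (INR k + 2))
  end.

Definition legendreP (n : nat) (x : R) : R := fst (legendre_pair n x).

Definition Gamma (s : R) : R :=
  RInt_gen (fun t => Rpower t (s - 1) * exp (- t))
           (at_right 0) (Rbar_locally p_infty).

Fixpoint poch (a : R) (k : nat) : R :=
  match k with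
  | O => 1
  | S j => poch a j * (a + INR j)
  end.

(* k-th term coefficient of 4F3(a1,a2,a3,a4; b1,b2,b3; z) (without z^k). *)
Definition hyp43_coef (a1 a2 a3 a4 b1 b2 b3 : R) (k : nat) : R :=
  poch a1 k * poch a2 k * poch a3 k * poch a4 k
  / (poch b1 k * poch b2 k * poch b3 k * INR (Factorial.fact k)).

Definition Rmn (m n : nat) (y : R) : R :=
  RInt (fun x => legendreP n x * legendreP (n + m) (x + y)) (-1) 1.

(* The polynomial y^m * 4F3(-m/2,(1-m)/2,(1-m)/2,(2-m)/2; 1-m, 1/2-m-n, n+3/2; 4/y^2).
   The series terminates: for k > floor(m/2) one of the upper Pochhammer symbols
   (-m/2)_k (m even) or ((1-m)/2)_k (m odd) vanishes, so only k = 0..floor(m/2)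
   contribute, and y^m (4/y^2)^k = 4^k y^(m-2k). *)
Definition hyp_poly (m n : nat) (y : R) : R :=
  sum_f_R0 (fun k =>
     hyp43_coef (- INR m / 2) ((1 - INR m) / 2) ((1 - INR m) / 2) ((2 - INR m) / 2)
                (1 - INR m) (/ 2 - INR m - INR n) (INR n + 3 / 2) k
     * 4 ^ k * y ^ (m - 2 * k)) (Nat.div2 m).

(* Main.v *)
Require Import Defs.
From Stdlib Require Import Reals.
From Coquelicot Require Import Coquelicot.
From Stdlib Require Import Lra Lia Classical Factorial.
Open Scope R_scope.

Lemma P0 x : legendreP 0 x = 1.
Proof. reflexivity. Qed.
Lemma P1 x : legendreP 1 x = x.
Proof. reflexivity. Qed.
Lemma Lrec k x : legendreP (S (S k)) x =
  ((2 * INR k + 3) * x * legendreP (S k) x - (INR k + 1) * legendreP k x) / (INR k + 2).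
Proof.
  unfold legendreP. simpl legendre_pair.
  destruct (legendre_pair k x) as [p q] eqn:E. simpl. reflexivity.
Qed.

Lemma INR_pos_2 k : 0 < INR k + 2.
Proof. pose proof (pos_INR k). lra. Qed.

Lemma xLrec k x : x * legendreP (S k) x =
  ((INR k + 2) * legendreP (S (S k)) x + (INR k + 1) * legendreP k x) / (2 * INR k + 3).
Proof.
  rewrite Lrec. pose proof (pos_INR k). field. lra.
Qed.

Fixpoint Dl (n : nat) (x : R) : R :=
  match n with
  | O => 0
  | S k => match k with
           | O => 1
           | S j => (2 * INR j + 3) * legendreP (S j) x + Dl j x
           end
  end.

Lemma Drec j x : Dl (S (S j)) x = (2 * INR j + 3) * legendreP (S j) x + Dl j x.
Proof. reflexivity. Qed.

Lemma BC n x :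
  (x * Dl (S n) x - Dl n x = (INR n + 1) * legendreP (S n) x) /\
  (x * Dl n x - Dl (S n) x = - (INR n + 1) * legendreP n x).
Proof.
  induction n as [|n [IHB IHC]].
  - change (Dl 1 x) with 1. change (Dl 0 x) with 0. rewrite P0, P1. simpl INR. split; lra.
  - split.
    + rewrite Drec, Lrec. rewrite S_INR.
      assert (H : x * Dl (S n) x = Dl n x + (INR n + 1) * legendreP (S n) x) by lra.
      pose proof (pos_INR n).
      replace (x * ((2 * INR n + 3) * legendreP (S n) x + Dl n x) - Dl (S n) x)
        with ((2 * INR n + 3) * x * legendreP (S n) x + (x * Dl n x - Dl (S n) x)) by ring.
      rewrite IHC. field. lra.
    + rewrite Drec. rewrite S_INR.
      replace (x * Dl (S n) x - ((2 * INR n + 3) * legendreP (S n) x + Dl n x))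
        with ((x * Dl (S n) x - Dl n x) - (2 * INR n + 3) * legendreP (S n) x) by ring.
      rewrite IHB. ring.
Qed.

Lemma P_derive n x : is_derive (legendreP n) x (Dl n x).
Proof.
  revert x.
  assert (H : forall n : nat, (forall x, is_derive (legendreP n) x (Dl n x)) /\
                        (forall x, is_derive (legendreP (S n)) x (Dl (S n) x))).
  { clear n. intro n. induction n as [|n [IH1 IH2]].
    - split; intro x.
      + apply (is_derive_ext (fun _ => 1)). { intro; reflexivity. }
        auto_derive; [exact I|reflexivity].
      + apply (is_derive_ext (fun t => t)). { intro; reflexivity. }
        auto_derive; [exact I|reflexivity].
    - split; [exact IH2|]. intro x.
      apply (is_derive_ext (fun t => ((2 * INR n + 3) * t * legendreP (S n) t - (INR n + 1) * legendreP n t) / (INR n + 2))).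
      { intro t. rewrite Lrec. reflexivity. }
      auto_derive.
      + split; [eexists; apply IH2|]. split; [eexists; apply IH1|]. auto.
      + replace (Derive (fun x0 => legendreP (S n) x0) x) with (Dl (S n) x)
          by (symmetry; apply is_derive_unique; apply IH2).
        replace (Derive (fun x0 => legendreP n x0) x) with (Dl n x)
          by (symmetry; apply is_derive_unique; apply IH1).
        rewrite Drec. destruct (BC n x) as [HB _].
        pose proof (pos_INR n).
        assert (E: x * Dl (S n) x = Dl n x + (INR n + 1) * legendreP (S n) x) by lra.
        replace ((2 * INR n + 3) * x * (1 * Dl (S n) x)) with ((2 * INR n + 3) * (x * Dl (S n) x)) by ring.
        rewrite E. field. lra. }
  exact (proj1 (H n)).
Qed.

Lemma cont_plus (f g : R -> R) x : continuous f x -> continuous g x -> continuous (fun t => f t + g t) x.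
Proof. intros; exact (continuous_plus f g x H H0). Qed.
Lemma cont_mult (f g : R -> R) x : continuous f x -> continuous g x -> continuous (fun t => f t * g t) x.
Proof. intros; exact (continuous_mult f g x H H0). Qed.
Lemma cont_const (c : R) x : continuous (fun _ : R => c) x.
Proof. apply continuous_const. Qed.
Lemma cont_id x : continuous (fun t : R => t) x.
Proof. apply continuous_id. Qed.
Lemma cont_scal (c : R) (f : R -> R) x : continuous f x -> continuous (fun t => c * f t) x.
Proof. intros; apply cont_mult; auto using cont_const. Qed.
Lemma cont_shift (f : R -> R) y x : continuous f (x + y) -> continuous (fun t => f (t + y)) x.
Proof.
  intros H. apply (continuous_comp (fun t => t + y) f). 2: exact H.
  apply cont_plus; [apply cont_id|apply cont_const].
Qed.
Lemma ex_cont (f : R -> R) a b : (forall x, continuous f x) -> ex_RInt f a b.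
Proof. intros H. apply (@ex_RInt_continuous R_CompleteNormedModule). intros; apply H. Qed.
Lemma RInt_plus' (f g : R -> R) a b : ex_RInt f a b -> ex_RInt g a b ->
  RInt (fun x => f x + g x) a b = RInt f a b + RInt g a b.
Proof. intros. exact (RInt_plus f g a b H H0). Qed.
Lemma RInt_scal' (f : R -> R) a b c : ex_RInt f a b ->
  RInt (fun x => c * f x) a b = c * RInt f a b.
Proof. intros. exact (RInt_scal f a b c H). Qed.
Lemma RInt_ext' (f g : R -> R) a b : (forall x, f x = g x) -> RInt f a b = RInt g a b.
Proof. intros; apply RInt_ext; auto. Qed.

Ltac contt := repeat match goal with
  | |- continuous (fun _ => ?c) _ => apply cont_const
  | |- continuous (fun t => t) _ => apply cont_id
  | |- continuous (fun t => _ + _) _ => apply cont_plus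
  | |- continuous (fun t => _ * _) _ => apply cont_mult
  end.
Ltac exc := apply ex_cont; intro; contt.

Lemma P_cont n x : continuous (legendreP n) x.
Proof. apply (@ex_derive_continuous R_AbsRing R_NormedModule). eexists. apply P_derive. Qed.

Lemma Dl_cont n x : continuous (Dl n) x.
Proof.
  assert (H : forall n, continuous (Dl n) x /\ continuous (Dl (S n)) x).
  { clear n. intro n. induction n as [|n [IH1 IH2]].
    - split; [apply (continuous_ext (fun _ => 0)); [reflexivity|apply cont_const]
             |apply (continuous_ext (fun _ => 1)); [reflexivity|apply cont_const]].
    - split; [exact IH2|].
      apply (continuous_ext (fun t => (2 * INR n + 3) * legendreP (S n) t + Dl n t)).
      { intro; reflexivity. }
      apply cont_plus; [apply cont_scal; apply P_cont | exact IH1]. }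
  apply H.
Qed.

Lemma P_ends n : legendreP n 1 = 1 /\ legendreP n (-1) = (-1) ^ n.
Proof.
  assert (H : forall n, (legendreP n 1 = 1 /\ legendreP n (-1) = (-1) ^ n) /\
                        (legendreP (S n) 1 = 1 /\ legendreP (S n) (-1) = (-1) ^ (S n))).
  { clear n. intro n. induction n as [|n [[A1 A2] [B1 B2]]].
    - rewrite P0, P1, P0, P1. simpl. lra.
    - split; [split; auto|].
      rewrite !Lrec, A1, A2, B1, B2. pose proof (pos_INR n).
      split; simpl; field; lra. }
  apply H.
Qed.

Lemma P_int0 n : (1 <= n)%nat -> RInt (legendreP n) (-1) 1 = 0.
Proof.
  intros Hn. destruct n as [|j]; [lia|].
  pose proof (pos_INR j).
  apply is_RInt_unique.
  evar (l : R).
  replace 0 with l.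
  - apply (is_RInt_derive (fun t => (legendreP (S (S j)) t - legendreP j t) / (2 * INR j + 3))).
    + intros x _.
      auto_derive.
      * split; [eexists; apply P_derive|]. split; [eexists; apply P_derive|]. auto.
      * replace (Derive (fun x0 => legendreP (S (S j)) x0) x) with (Dl (S (S j)) x)
          by (symmetry; apply is_derive_unique; apply P_derive).
        replace (Derive (fun x0 => legendreP j x0) x) with (Dl j x)
          by (symmetry; apply is_derive_unique; apply P_derive).
        rewrite Drec. field. lra.
    + intros; apply P_cont.
  - unfold l, minus, plus, opp; simpl.
    destruct (P_ends (S (S j))) as [A1 A2]. destruct (P_ends j) as [B1 B2].
    rewrite A1, A2, B1, B2. simpl. field. lra.
Qed.

Inductive PD : nat -> (R -> R) -> Prop :=
 | PD_zero d : PD d (fun _ => 0)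
 | PD_const d c : PD (S d) (fun _ => c)
 | PD_mx d f : PD d f -> PD (S d) (fun x => x * f x)
 | PD_add d f g : PD d f -> PD d g -> PD d (fun x => f x + g x)
 | PD_scal d c f : PD d f -> PD d (fun x => c * f x)
 | PD_ext d f g : PD d f -> (forall x, f x = g x) -> PD d g
 | PD_S d f : PD d f -> PD (S d) f.

Lemma PD_cont d f : PD d f -> forall x, continuous f x.
Proof.
  induction 1; intro x.
  - apply cont_const.
  - apply cont_const.
  - apply cont_mult; auto using cont_id.
  - apply cont_plus; auto.
  - apply cont_scal; auto.
  - apply (continuous_ext f); auto.
  - auto.
Qed.

Lemma PD_le d d' f : (d <= d')%nat -> PD d f -> PD d' f.
Proof. induction 1; auto using PD_S. Qed.

Lemma ortho d f : PD d f -> forall n, (d <= n)%nat ->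
  @eq R (RInt (fun x => legendreP n x * f x) (-1) 1) 0.
Proof.
  intro H.
  induction H; intros n Hn.
  - rewrite (RInt_ext' _ (fun x => 0 * legendreP n x)) by (intro; ring).
    rewrite RInt_scal' by (apply ex_cont, P_cont). ring.
  - rewrite (RInt_ext' _ (fun x => c * legendreP n x)) by (intro; ring).
    rewrite RInt_scal' by (apply ex_cont, P_cont). rewrite P_int0 by lia. ring.
  - destruct n as [|k]; [lia|].
    assert (Hf : forall x, continuous f x).
    { intro x. apply PD_cont with d. exact H. }
    pose proof (pos_INR k).
    rewrite (RInt_ext' _ (fun x => ((INR k + 2) / (2 * INR k + 3)) * (legendreP (S (S k)) x * f x)
                                 + ((INR k + 1) / (2 * INR k + 3)) * (legendreP k x * f x))).
    2:{ intro x. replace (legendreP (S k) x * (x * f x)) with ((x * legendreP (S k) x) * f x) by ring.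
        rewrite xLrec. field. lra. }
    rewrite RInt_plus'; try (apply ex_cont; intro; apply cont_scal, cont_mult; auto using P_cont).
    rewrite !RInt_scal'; try (apply ex_cont; intro; apply cont_mult; auto using P_cont).
    rewrite !IHPD by lia. ring.
  - assert (Hf : forall x, continuous f x) by (apply PD_cont with d; auto).
    assert (Hg : forall x, continuous g x) by (apply PD_cont with d; auto).
    rewrite (RInt_ext' _ (fun x => legendreP n x * f x + legendreP n x * g x)) by (intro; ring).
    rewrite RInt_plus'; try (apply ex_cont; intro; apply cont_mult; auto using P_cont).
    rewrite IHPD1, IHPD2; auto. ring.
  - assert (Hf : forall x, continuous f x) by (apply PD_cont with d; auto).
    rewrite (RInt_ext' _ (fun x => c * (legendreP n x * f x))) by (intro; ring).
    rewrite RInt_scal'; try (apply ex_cont; intro; apply cont_mult; auto using P_cont).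
    rewrite IHPD; auto. ring.
  - assert (Hf : forall x, continuous f x) by (apply PD_cont with d; auto).
    rewrite <- (RInt_ext' (fun x => legendreP n x * f x)) by (intro x; rewrite H0; auto).
    apply IHPD; auto.
  - apply IHPD; auto. lia.
Qed.

Lemma PD_shift d f y : PD d f -> PD d (fun x => f (x + y)).
Proof.
  induction 1.
  - apply PD_zero.
  - apply PD_const.
  - apply PD_ext with (fun x => x * f (x + y) + y * f (x + y)).
    + apply PD_add; [apply PD_mx; auto| apply PD_S, PD_scal; auto].
    + intro; ring.
  - apply PD_add; auto.
  - apply PD_scal; auto.
  - apply PD_ext with (fun x => f (x + y)); auto.
  - apply PD_S; auto.
Qed.

Lemma P_PD n : PD (S n) (legendreP n).
Proof.
  assert (H : forall n, PD (S n) (legendreP n) /\ PD (S (S n)) (legendreP (S n))).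
  { clear n. intro n. induction n as [|n [IH1 IH2]].
    - split.
      + apply PD_ext with (fun _ => 1); [apply PD_const| intro; reflexivity].
      + apply PD_ext with (fun x => x * 1); [apply PD_mx, PD_const| intro x; rewrite P1; ring].
    - split; [exact IH2|].
      apply PD_ext with (fun x => (2 * INR n + 3) / (INR n + 2) * (x * legendreP (S n) x)
                                 + (- (INR n + 1) / (INR n + 2)) * legendreP n x).
      + apply PD_add; [apply PD_scal, PD_mx; exact IH2|].
        apply PD_scal. apply PD_le with (S n); [lia|exact IH1].
      + intro x. rewrite Lrec. pose proof (pos_INR n). field. lra. }
  apply H.
Qed.

Lemma Dl_PD n : PD n (Dl n).
Proof.
  assert (H : forall n, PD n (Dl n) /\ PD (S n) (Dl (S n))).
  { clear n. intro n. induction n as [|n [IH1 IH2]].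
    - split.
      + apply PD_ext with (fun _ => 0); [apply PD_zero| intro; reflexivity].
      + apply PD_ext with (fun _ => 1); [apply PD_const| intro; reflexivity].
    - split; [exact IH2|].
      apply PD_ext with (fun x => (2 * INR n + 3) * legendreP (S n) x + Dl n x).
      + apply PD_add; [apply PD_scal, P_PD|]. apply PD_le with n; [lia|exact IH1].
      + intro; reflexivity. }
  apply H.
Qed.

Ltac contt2 := repeat match goal with
  | |- continuous (fun _ => ?c) _ => apply cont_const
  | |- continuous (fun t => t) _ => apply cont_id
  | |- continuous (fun t => _ + _) _ => apply cont_plus
  | |- continuous (fun t => _ * _) _ => apply cont_mult
  | |- continuous (fun t => legendreP _ t) _ => apply P_cont
  | |- continuous (fun t => Dl _ t) _ => apply Dl_cont
  | |- continuous (legendreP _) _ => apply P_cont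
  | |- continuous (Dl _) _ => apply Dl_cont
  | |- continuous (fun t => legendreP _ (t + _)) _ => apply cont_shift; apply P_cont
  | |- continuous (fun t => Dl _ (t + _)) _ => apply cont_shift; apply Dl_cont
  end.
Ltac exc2 := apply ex_cont; intro; contt2.

Lemma ortho_PP a b : (a < b)%nat ->
  @eq R (RInt (fun x => legendreP b x * legendreP a x) (-1) 1) 0.
Proof. intros. apply ortho with (S a); [apply P_PD| lia]. Qed.

Lemma exP2 a b : ex_RInt (fun x => legendreP a x * legendreP b x) (-1) 1.
Proof. apply ex_cont; intro; apply cont_mult; apply P_cont. Qed.

Lemma int_x2 : @eq R (RInt (fun x => x * x) (-1) 1) (2/3).
Proof.
  apply is_RInt_unique.
  evar (l : R). replace (2/3) with l.
  - apply (is_RInt_derive (fun t => t * t * t / 3)).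
    + intros x _. auto_derive; auto. field.
    + intros; apply cont_mult; apply cont_id.
  - unfold l, minus, plus, opp; simpl. field.
Qed.

Lemma int_1 : @eq R (RInt (fun x => 1) (-1) 1) 2.
Proof. rewrite RInt_const. unfold scal; simpl. unfold mult; simpl. ring. Qed.

Lemma P_norm n : @eq R (RInt (fun x => legendreP n x * legendreP n x) (-1) 1) (2 / (2 * INR n + 1)).
Proof.
  assert (H : forall n, @eq R (RInt (fun x => legendreP n x * legendreP n x) (-1) 1) (2 / (2 * INR n + 1)) /\
     @eq R (RInt (fun x => legendreP (S n) x * legendreP (S n) x) (-1) 1) (2 / (2 * INR (S n) + 1))).
  { clear n. intro n. induction n as [|j [IH1 IH2]].
    - split.
      + rewrite (RInt_ext' _ (fun x => 1)) by (intro; rewrite P0; ring). rewrite int_1. simpl. field.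
      + rewrite (RInt_ext' _ (fun x => x * x)) by (intro; rewrite P1; ring). rewrite int_x2. simpl. field.
    - split; [exact IH2|].
      pose proof (pos_INR j).
      rewrite (RInt_ext' _ (fun x => ((2 * INR j + 3) / (INR j + 2) * (INR j + 2) / (2 * INR j + 5))
                                      * (legendreP (S j) x * legendreP (S j) x)
                                   + ((2 * INR j + 3) / (INR j + 2) * (INR j + 3) / (2 * INR j + 5))
                                      * (legendreP (S (S (S j))) x * legendreP (S j) x)
                                   + (- (INR j + 1) / (INR j + 2)) * (legendreP (S (S j)) x * legendreP j x))).
      2:{ intro x. rewrite (Lrec (S j) x). rewrite (Lrec j x). rewrite S_INR. field. lra. }
      rewrite RInt_plus' by exc2.
      rewrite RInt_plus' by exc2.
      rewrite (RInt_scal' (fun x => legendreP (S j) x * legendreP (S j) x)) by apply exP2.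
      rewrite (RInt_scal' (fun x => legendreP (S (S (S j))) x * legendreP (S j) x)) by apply exP2.
      rewrite (RInt_scal' (fun x => legendreP (S (S j)) x * legendreP j x)) by apply exP2.
      rewrite IH2, !ortho_PP by lia. rewrite !S_INR. field. lra. }
  exact (proj1 (H n)).
Qed.

Lemma dshift n N v u : is_derive (fun z => legendreP n v * legendreP N (v + z)) u
                                 (legendreP n v * Dl N (v + u)).
Proof.
  auto_derive.
  - eexists; apply (P_derive N (v + u)).
  - replace (Derive (fun x => legendreP N x) (v + u)) with (Dl N (v + u))
      by (symmetry; apply is_derive_unique; apply P_derive). ring.
Qed.

Lemma cpt_of_cont (f : R -> R) x : continuous f x -> continuity_pt f x.
Proof. intro H. apply continuity_pt_filterlim. exact H. Qed.

Lemma R_derive m n y : is_derive (fun y => Rmn m n y) y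
   (RInt (fun x => legendreP n x * Dl (n + m) (x + y)) (-1) 1).
Proof.
  unfold Rmn.
  set (N := (n + m)%nat).
  assert (H := is_derive_RInt_param (fun u t => legendreP n t * legendreP N (t + u)) (-1) 1 y).
  rewrite (RInt_ext' (fun t => Derive (fun u => legendreP n t * legendreP N (t + u)) y)
                     (fun x => legendreP n x * Dl N (x + y))) in H.
  2:{ intro x. apply is_derive_unique. apply dshift. }
  apply H.
  - apply filter_forall. intros x0 t _. eexists. apply dshift.
  - intros t _.
    apply continuity_2d_pt_ext with (fun u v => legendreP n v * Dl N (v + u)).
    { intros u v. symmetry. apply is_derive_unique. apply dshift. }
    apply continuity_2d_pt_mult.
    + apply (continuity_1d_2d_pt_comp (legendreP n) (fun u v => v)).
      * apply cpt_of_cont, P_cont.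
      * apply continuity_2d_pt_id2.
    + apply (continuity_1d_2d_pt_comp (Dl N) (fun u v => v + u)).
      * apply cpt_of_cont, Dl_cont.
      * apply continuity_2d_pt_plus; [apply continuity_2d_pt_id2|apply continuity_2d_pt_id1].
  - apply filter_forall. intro u. exc2.
Qed.

Lemma const_of_d0 (h : R -> R) : (forall y, is_derive h y 0) -> forall y, h y = h 0.
Proof.
  intros Hd y.
  assert (H := is_RInt_derive h (fun _ => 0) 0 y (fun x _ => Hd x) (fun x _ => cont_const 0 x)).
  apply is_RInt_unique in H. rewrite RInt_const in H.
  unfold scal, minus, plus, opp in H; simpl in H. unfold mult in H; simpl in H.
  lra.
Qed.

Lemma Dl_S n x : Dl (S n) x = (2 * INR n + 1) * legendreP n x + Dl (pred n) x.
Proof.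
  destruct n as [|k].
  - simpl. rewrite P0. ring.
  - rewrite Drec. simpl pred. rewrite S_INR. ring.
Qed.

Lemma Rd_rec j n y :
  @eq R (RInt (fun x => legendreP n x * Dl (n + S (S j)) (x + y)) (-1) 1)
  (RInt (fun x => legendreP n x * Dl (n + j) (x + y)) (-1) 1
   + (2 * INR (n + S j) + 1) * Rmn (S j) n y).
Proof.
  unfold Rmn.
  rewrite (RInt_ext' _ (fun x => legendreP n x * Dl (n + j) (x + y)
         + (2 * INR (n + S j) + 1) * (legendreP n x * legendreP (n + S j) (x + y)))).
  2:{ intro x. replace (n + S (S j))%nat with (S (S (n + j))) by lia.
      replace (n + S j)%nat with (S (n + j)) by lia. rewrite Drec. rewrite S_INR. ring. }
  rewrite RInt_plus' by exc2.
  rewrite (RInt_scal' (fun x => legendreP n x * legendreP (n + S j) (x + y))) by exc2.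
  reflexivity.
Qed.

Lemma R_at0 j n : Rmn (S j) n 0 = 0.
Proof.
  unfold Rmn.
  rewrite (RInt_ext' _ (fun x => legendreP (n + S j) x * legendreP n x)).
  2:{ intro x. rewrite Rplus_0_r. ring. }
  apply ortho_PP. lia.
Qed.

Lemma R0_const n y : Rmn 0 n y = 2 / (2 * INR n + 1).
Proof.
  assert (Hd : forall y, is_derive (fun y => Rmn 0 n y) y 0).
  { intro y0. assert (H := R_derive 0 n y0).
    replace (RInt (fun x => legendreP n x * Dl (n + 0) (x + y0)) (-1) 1) with 0 in H; [exact H|].
    symmetry. apply ortho with n; [|lia]. apply PD_shift. rewrite Nat.add_0_r. apply Dl_PD. }
  rewrite (const_of_d0 _ Hd y).
  unfold Rmn. rewrite Nat.add_0_r.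
  rewrite (RInt_ext' _ (fun x => legendreP n x * legendreP n x)) by (intro; rewrite Rplus_0_r; ring).
  apply P_norm.
Qed.

Lemma R1_lin n y : Rmn 1 n y = 2 * y.
Proof.
  pose proof (pos_INR n).
  assert (Hd : forall y, is_derive (fun y => Rmn 1 n y - 2 * y) y 0).
  { intro y0. assert (H0 := R_derive 1 n y0).
    replace (RInt (fun x => legendreP n x * Dl (n + 1) (x + y0)) (-1) 1) with 2 in H0.
    - evar (d : R). replace 0 with d.
      + apply @is_derive_minus. exact H0.
        apply (is_derive_ext (fun t => 2 * t)); [intro; reflexivity|].
        auto_derive; auto. 
      + unfold d, minus, plus, opp; simpl. ring.
    - rewrite (RInt_ext' _ (fun x => (2 * INR n + 1) * (legendreP n x * legendreP (n + 0) (x + y0))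
                                     + legendreP n x * Dl (pred n) (x + y0))).
      2:{ intro x. replace (n + 1)%nat with (S n) by lia. rewrite Dl_S. rewrite Nat.add_0_r. ring. }
      rewrite RInt_plus' by exc2.
      rewrite (RInt_scal' (fun x => legendreP n x * legendreP (n + 0) (x + y0))) by exc2.
      change (RInt (fun x => legendreP n x * legendreP (n + 0) (x + y0)) (-1) 1) with (Rmn 0 n y0).
      rewrite R0_const.
      rewrite (ortho (pred n)); [field; lra| |lia].
      apply PD_shift. apply Dl_PD. }
  assert (E := const_of_d0 _ Hd y). simpl in E.
  rewrite R_at0 in E. lra.
Qed.

Lemma main_ind (Q Qd : nat -> R -> R) n :
  (forall m y, is_derive (Q m) y (Qd m y)) ->
  (forall y, Q 0%nat y = 2 / (2 * INR n + 1)) ->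
  (forall y, Q 1%nat y = 2 * y) ->
  (forall j y, Qd (S (S j)) y = Qd j y + (2 * INR (n + S j) + 1) * Q (S j) y) ->
  (forall j, Q (S (S j)) 0 = 0) ->
  forall m y, Rmn m n y = Q m y.
Proof.
  intros HQd HQ0 HQ1 HQr HQz.
  assert (H : forall m, (forall y, Rmn m n y = Q m y) /\ (forall y, Rmn (S m) n y = Q (S m) y)).
  { intro m. induction m as [|j [IH1 IH2]].
    - split; intro y; [rewrite R0_const, HQ0 | rewrite R1_lin, HQ1]; reflexivity.
    - split; [exact IH2|].
      assert (Hd : forall y, is_derive (fun y => Rmn (S (S j)) n y - Q (S (S j)) y) y 0).
      { intro y.
        evar (d : R). replace 0 with d.
        - apply @is_derive_minus; [apply R_derive| apply HQd].
        - unfold d, minus, plus, opp; simpl.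
          rewrite Rd_rec, HQr.
          assert (E : RInt (fun x => legendreP n x * Dl (n + j) (x + y)) (-1) 1 = Qd j y).
          { assert (Hj : is_derive (Q j) y (RInt (fun x => legendreP n x * Dl (n + j) (x + y)) (-1) 1)).
            { apply (is_derive_ext (fun y => Rmn j n y)); [apply IH1| apply R_derive]. }
            rewrite <- (is_derive_unique _ _ _ Hj). apply is_derive_unique. apply HQd. }
          rewrite E, IH2. ring. }
      intro y. assert (E := const_of_d0 _ Hd y). simpl in E.
      rewrite R_at0, HQz in E. lra. }
  intros m y. apply (proj1 (H m)).
Qed.

Definition gi (s t : R) := Rpower t (s - 1) * exp (- t).

Lemma loc_pos x : 0 < x -> locally x (fun t => 0 < t).
Proof.
  intro H. exists (mkposreal x H). intros y Hy.
  change (Rabs (y + - x) < x) in Hy. apply Rabs_def2 in Hy. simpl in Hy. lra.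
Qed.

Lemma fp_pos : filter_prod (at_right 0) (Rbar_locally p_infty) (fun ab => 0 < fst ab /\ 0 < snd ab).
Proof.
  apply Filter_prod with (fun a => 0 < a) (fun b => 0 < b).
  - exists (mkposreal 1 Rlt_0_1). intros y _ Hy. exact Hy.
  - exists 0. auto.
  - intros x y Hx Hy. simpl. auto.
Qed.

Lemma gen_Derive_pos (F f : R -> R) la lb :
  (forall x, 0 < x -> is_derive F x (f x)) -> (forall x, 0 < x -> continuous f x) ->
  filterlim F (at_right 0) (locally la) -> filterlim F (Rbar_locally p_infty) (locally lb) ->
  is_RInt_gen f (at_right 0) (Rbar_locally p_infty) (lb - la).
Proof.
  intros Hd Hc H0 Hinf.
  apply is_RInt_gen_ext with (Derive F).
  - eapply filter_imp; [|exact fp_pos]. intros [a b] [Ha Hb] x Hx. simpl in *.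
    apply is_derive_unique. apply Hd.
    assert (0 < Rmin a b) by (apply Rmin_glb_lt; auto). lra.
  - apply is_RInt_gen_Derive; auto.
    + eapply filter_imp; [|exact fp_pos]. intros [a b] [Ha Hb] x Hx. simpl in *.
      assert (0 < Rmin a b) by (apply Rmin_glb_lt; auto).
      exists (f x). apply Hd. lra.
    + eapply filter_imp; [|exact fp_pos]. intros [a b] [Ha Hb] x Hx. simpl in *.
      assert (0 < Rmin a b) by (apply Rmin_glb_lt; auto).
      apply continuous_ext_loc with f.
      * eapply filter_imp; [|apply (loc_pos x); lra]. intros y Hy. symmetry.
        apply is_derive_unique. apply Hd; auto.
      * apply Hc. lra.
Qed.

Lemma ball_R (L e x : R) : Rabs (x - L) < e -> ball L e x.
Proof. intro H. change (Rabs (x + - L) < e). exact H. Qed.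

Lemma mono_lim_pinf (F : R -> R) c B :
  (forall a b, c <= a -> a <= b -> F a <= F b) -> (forall a, c <= a -> F a <= B) ->
  exists L, filterlim F (Rbar_locally p_infty) (locally L) /\ (forall a, c <= a -> F a <= L).
Proof.
  intros Hm Hb.
  set (E := fun y => exists a, c <= a /\ y = F a).
  assert (HE1 : bound E) by (exists B; intros y [a [Ha ->]]; auto).
  assert (HE2 : exists y, E y) by (exists (F c); exists c; split; [lra|auto]).
  destruct (completeness E HE1 HE2) as [L [Hub Hlub]].
  exists L. split.
  - apply filterlim_locally. intro eps.
    assert (Ha0 : exists a0, c <= a0 /\ L - eps < F a0).
    { apply NNPP. intro Hn.
      assert (L <= L - eps).
      { apply Hlub. intros y [a [Ha ->]].
        destruct (Rle_or_lt (F a) (L - eps)) as [h|h]; auto.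
        exfalso. apply Hn. exists a; auto. }
      destruct eps; simpl in *; lra. }
    destruct Ha0 as [a0 [Hc0 Ha0]].
    exists (Rmax c a0). intros x Hx.
    assert (c <= x) by (apply Rle_trans with (Rmax c a0); [apply Rmax_l| lra]).
    assert (a0 <= x) by (apply Rle_trans with (Rmax c a0); [apply Rmax_r| lra]).
    apply ball_R.
    assert (F a0 <= F x) by (apply Hm; auto).
    assert (F x <= L) by (apply Hub; exists x; auto).
    apply Rabs_def1; lra.
  - intros a Ha. apply Hub. exists a; auto.
Qed.

Lemma mono_lim_0 (F : R -> R) B :
  (forall a b, 0 < a -> a <= b -> b <= 1 -> F a <= F b) -> (forall a, 0 < a -> a <= 1 -> - B <= F a) ->
  exists L, filterlim F (at_right 0) (locally L) /\ (forall a, 0 < a -> a <= 1 -> L <= F a).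
Proof.
  intros Hm Hb.
  set (E := fun y => exists a, 0 < a /\ a <= 1 /\ y = - F a).
  assert (HE1 : bound E) by (exists B; intros y [a [Ha [Ha' ->]]]; specialize (Hb a Ha Ha'); lra).
  assert (HE2 : exists y, E y) by (exists (- F 1); exists 1; repeat split; lra).
  destruct (completeness E HE1 HE2) as [L [Hub Hlub]].
  exists (- L). split.
  - apply filterlim_locally. intro eps.
    assert (Ha0 : exists a0, 0 < a0 /\ a0 <= 1 /\ L - eps < - F a0).
    { apply NNPP. intro Hn.
      assert (L <= L - eps).
      { apply Hlub. intros y [a [Ha [Ha' ->]]].
        destruct (Rle_or_lt (- F a) (L - eps)) as [h|h]; auto.
        exfalso. apply Hn. exists a; auto. }
      destruct eps; simpl in *; lra. }
    destruct Ha0 as [a0 [Hp0 [H10 Ha0]]].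
    exists (mkposreal a0 Hp0). intros x Hx Hxp.
    change (Rabs (x + - 0) < a0) in Hx. apply Rabs_def2 in Hx.
    apply ball_R.
    assert (F x <= F a0) by (apply Hm; lra).
    assert (- F x <= L) by (apply Hub; exists x; repeat split; lra).
    apply Rabs_def1; lra.
  - intros a Ha Ha'. assert (- F a <= L) by (apply Hub; exists a; auto). lra.
Qed.

Lemma Rpow_derive a x : 0 < x -> is_derive (fun t => Rpower t a) x (a * Rpower x (a - 1)).
Proof. intro H. apply is_derive_Reals. apply derivable_pt_lim_power; auto. Qed.

Lemma Rpow_cont a x : 0 < x -> continuous (fun t => Rpower t a) x.
Proof.
  intro H. apply (@ex_derive_continuous R_AbsRing R_NormedModule).
  eexists. apply Rpow_derive; auto.
Qed.

Lemma expm_derive x : is_derive (fun t => exp (- t)) x (- exp (- x)).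
Proof. auto_derive; auto. ring. Qed.

Lemma expm_cont x : continuous (fun t => exp (- t)) x.
Proof. apply (@ex_derive_continuous R_AbsRing R_NormedModule). eexists. apply expm_derive. Qed.

Lemma gi_cont s x : 0 < x -> continuous (gi s) x.
Proof.
  intro H. unfold gi.
  apply (continuous_mult (fun t => Rpower t (s - 1)) (fun t => exp (- t))).
  - apply Rpow_cont; auto.
  - apply expm_cont.
Qed.

Lemma h_exp s t : Rpower t s * exp (- t) = exp (s * ln t - t).
Proof. unfold Rpower. rewrite <- exp_plus. f_equal. Qed.

Lemma lim_m_inf_0 : filterlim exp (Rbar_locally m_infty) (locally 0).
Proof. exact is_lim_exp_m. Qed.

Lemma lim_h_0 s : 0 < s -> filterlim (fun t => Rpower t s * exp (- t)) (at_right 0) (locally 0).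
Proof.
  intro Hs.
  apply (filterlim_ext (fun t => exp (s * ln t - t))). { intro; rewrite h_exp; auto. }
  apply (filterlim_comp _ _ _ (fun t => s * ln t - t) exp _ (Rbar_locally m_infty)); [|apply lim_m_inf_0].
  intros P [M HM]. unfold filtermap.
  assert (H1 : at_right 0 (fun t => ln t < M / s)).
  { apply (is_lim_ln_0 (fun u => u < M / s)). exists (M / s). auto. }
  assert (H2 : at_right 0 (fun t => 0 < t)).
  { exists (mkposreal 1 Rlt_0_1). intros y _ Hy. exact Hy. }
  generalize (filter_and _ _ H1 H2). apply filter_imp. intros t [Ht1 Ht2].
  apply HM.
  apply Rmult_lt_compat_l with (r := s) in Ht1; auto.
  replace (s * (M / s)) with M in Ht1 by (field; lra). lra.
Qed.

Lemma lim_h_inf s : 0 <= s -> filterlim (fun t => Rpower t s * exp (- t)) (Rbar_locally p_infty) (locally 0).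
Proof.
  intro Hs.
  apply (filterlim_ext (fun t => exp (s * ln t - t))). { intro; rewrite h_exp; auto. }
  apply (filterlim_comp _ _ _ (fun t => s * ln t - t) exp _ (Rbar_locally m_infty)); [|apply lim_m_inf_0].
  intros P [M HM]. unfold filtermap.
  assert (H1 : Rbar_locally p_infty (fun t => Rabs (ln t / t - 0) < / (2 * (s + 1)))).
  { assert (Hp : 0 < / (2 * (s + 1))) by (apply Rinv_0_lt_compat; lra).
    apply (is_lim_div_ln_p (fun u => Rabs (u - 0) < / (2 * (s + 1)))).
    exists (mkposreal _ Hp). intros y Hy. exact Hy. }
  destruct H1 as [M1 HM1].
  exists (Rmax (Rmax M1 0) (- 2 * M)). intros x Hx.
  assert (HM1x : M1 < x) by (eapply Rle_lt_trans; [|exact Hx]; eapply Rle_trans; [apply Rmax_l|apply Rmax_l]).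
  assert (H0x : 0 < x) by (eapply Rle_lt_trans; [|exact Hx]; eapply Rle_trans; [apply Rmax_r|apply Rmax_l]).
  assert (HMx : - 2 * M < x) by (eapply Rle_lt_trans; [|exact Hx]; apply Rmax_r).
  apply HM. specialize (HM1 x HM1x).
  rewrite Rminus_0_r in HM1. apply Rabs_def2 in HM1. destruct HM1 as [A1 A2].
  assert (Hl : ln x < x / (2 * (s + 1))).
  { apply Rmult_lt_compat_r with (r := x) in A1; auto.
    replace (ln x / x * x) with (ln x) in A1 by (field; lra). lra. }
  assert (Hl2 : s * ln x <= s * (x / (2 * (s + 1)))).
  { apply Rmult_le_compat_l; lra. }
  assert (s * (x / (2 * (s + 1))) <= x / 2).
  { unfold Rdiv. rewrite <- Rmult_assoc. 
    apply Rle_trans with (1 * x * / 2); [|lra].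
    rewrite Rinv_mult. 
    replace (s * x * (/ 2 * / (s + 1))) with ((s / (s + 1)) * x * / 2) by (field; lra).
    apply Rmult_le_compat_r; [lra|]. apply Rmult_le_compat_r; [lra|].
    apply Rmult_le_reg_r with (s + 1); [lra|]. unfold Rdiv. rewrite Rmult_assoc, Rinv_l; lra. }
  lra.
Qed.

Lemma gi_step s l : 0 < s -> is_RInt_gen (gi s) (at_right 0) (Rbar_locally p_infty) l ->
  is_RInt_gen (gi (s + 1)) (at_right 0) (Rbar_locally p_infty) (s * l).
Proof.
  intros Hs Hl.
  assert (Hf : is_RInt_gen (fun t => s * gi s t - gi (s + 1) t) (at_right 0) (Rbar_locally p_infty) (0 - 0)).
  { apply (gen_Derive_pos (fun t => Rpower t s * exp (- t))).
    - intros x Hx. unfold gi. replace (s + 1 - 1) with s by ring.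
      evar (d : R). replace (s * (Rpower x (s - 1) * exp (- x)) - Rpower x s * exp (- x)) with d.
      + apply (is_derive_mult (fun t => Rpower t s) (fun t => exp (- t))).
        * apply Rpow_derive; auto.
        * apply expm_derive.
        * intros; apply Rmult_comm.
      + unfold d. simpl. unfold plus, mult; simpl. ring.
    - intros x Hx.
      apply (continuous_minus (fun t => s * gi s t) (gi (s + 1))).
      + apply (continuous_mult (fun _ => s) (gi s)). apply continuous_const. apply gi_cont; auto.
      + apply gi_cont; auto.
    - apply lim_h_0; auto.
    - apply lim_h_inf; lra. }
  assert (H2 := is_RInt_gen_scal _ s l Hl).
  assert (H3 := is_RInt_gen_minus _ _ _ _ H2 Hf).
  replace (s * l) with (minus (scal s l) (0 - 0)).
  - eapply is_RInt_gen_ext; [|exact H3].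
    apply filter_forall. intros [a b] x _. simpl. unfold minus, plus, opp, scal; simpl. unfold mult; simpl. ring.
  - unfold minus, plus, opp, scal; simpl. unfold mult; simpl. ring.
Qed.

Lemma gi1_int : is_RInt_gen (gi 1) (at_right 0) (Rbar_locally p_infty) 1.
Proof.
  replace 1 with (- 0 - (-1)) at 2 by ring.
  apply (gen_Derive_pos (fun t => - (Rpower t 0 * exp (- t)))).
  - intros x Hx. unfold gi. replace (1 - 1) with 0 by ring.
    rewrite Rpower_O by auto.
    apply (is_derive_ext (fun t => - exp (- t))).
    { intro t. unfold Rpower. rewrite Rmult_0_l, exp_0. rewrite Rmult_1_l. reflexivity. }
    auto_derive; auto. ring.
  - intros; apply gi_cont; auto.
  - apply (filterlim_ext_loc (fun t => - exp (- t))).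
    { exists (mkposreal 1 Rlt_0_1). intros y _ Hy. unfold Rpower. rewrite Rmult_0_l, exp_0, Rmult_1_l. reflexivity. }
    replace (-1) with (- exp (- 0)) by (rewrite Ropp_0, exp_0; ring).
    apply (filterlim_filter_le_1 (F := locally 0)).
    + intros P [e He]. exists e. intros y Hy _. apply He. exact Hy.
    + apply (@ex_derive_continuous R_AbsRing R_NormedModule (fun t => - exp (- t)) 0). auto_derive. auto.
  - assert (H := filterlim_comp _ _ _ _ opp _ _ _ (lim_h_inf 0 (Rle_refl 0)) (filterlim_opp 0)).
    exact H.
Qed.

Lemma exp_le' x y : x <= y -> exp x <= exp y.
Proof. intro H. destruct (Rle_lt_or_eq_dec _ _ H) as [h|h]; [left; apply exp_increasing; auto| subst; lra]. Qed.

Lemma exp_le1 x : x <= 0 -> exp x <= 1.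
Proof. intro H. rewrite <- exp_0. apply exp_le'. exact H. Qed.

Definition f12 := gi (/ 2).

Lemma f12_nonneg t : 0 <= f12 t.
Proof. unfold f12, gi, Rpower. apply Rmult_le_pos; left; apply exp_pos. Qed.

Lemma ex_f12 a b : 0 < a -> 0 < b -> ex_RInt f12 a b.
Proof.
  intros Ha Hb. apply (@ex_RInt_continuous R_CompleteNormedModule).
  intros z Hz. apply gi_cont.
  assert (0 < Rmin a b) by (apply Rmin_glb_lt; auto). lra.
Qed.

Lemma chasles_f12 a b c : 0 < a -> 0 < b -> 0 < c ->
  RInt f12 a b + RInt f12 b c = RInt f12 a c.
Proof. intros. exact (RInt_Chasles f12 a b c (ex_f12 a b H H0) (ex_f12 b c H0 H1)). Qed.

Lemma f12_le_exp t : 1 <= t -> f12 t <= exp (- t).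
Proof.
  intro H. unfold f12, gi, Rpower.
  rewrite <- (Rmult_1_l (exp (- t))) at 2.
  apply Rmult_le_compat_r; [left; apply exp_pos|].
  apply exp_le1.
  assert (0 <= ln t) by (rewrite <- ln_1; apply ln_le; lra). nra.
Qed.

Lemma f12_le_pow t : 0 < t -> f12 t <= Rpower t (/ 2 - 1).
Proof.
  intro H. unfold f12, gi.
  rewrite <- (Rmult_1_r (Rpower t (/ 2 - 1))) at 2.
  apply Rmult_le_compat_l; [unfold Rpower; left; apply exp_pos|].
  apply exp_le1. lra.
Qed.

Lemma int_exp_bound b : 1 <= b -> RInt (fun t => exp (- t)) 1 b <= 1.
Proof.
  intro Hb.
  rewrite (is_RInt_unique (fun t => exp (- t)) 1 b (minus ((fun t => - exp (- t)) b) ((fun t => - exp (- t)) 1))).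
  - unfold minus, plus, opp; simpl.
    assert (exp (Ropp 1) <= 1) by (apply exp_le1; lra).
    pose proof (exp_pos (- b)). lra.
  - apply (@is_RInt_derive R_CompleteNormedModule (fun t => - exp (- t))).
    + intros x _. auto_derive; auto. ring.
    + intros x _. apply expm_cont.
Qed.

Lemma int_pow_bound a : 0 < a -> a <= 1 -> RInt (fun t => Rpower t (/ 2 - 1)) a 1 <= 2.
Proof.
  intros Ha Ha1.
  rewrite (is_RInt_unique (fun t => Rpower t (/ 2 - 1)) a 1
     (minus ((fun t => 2 * Rpower t (/ 2)) 1) ((fun t => 2 * Rpower t (/ 2)) a))).
  - unfold minus, plus, opp; simpl.
    unfold Rpower at 1. rewrite ln_1, Rmult_0_r, exp_0.
    assert (0 < Rpower a (/ 2)) by (unfold Rpower; apply exp_pos). lra.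
  - apply (@is_RInt_derive R_CompleteNormedModule (fun t => 2 * Rpower t (/ 2))).
    + intros x Hx. rewrite Rmin_left in Hx by lra.
      evar (d : R). replace (Rpower x (/ 2 - 1)) with d.
      * apply (is_derive_scal (fun t => Rpower t (/ 2))). apply Rpow_derive. lra.
      * unfold d. field.
    + intros x Hx. rewrite Rmin_left in Hx by lra. apply Rpow_cont. lra.
Qed.

Lemma gamma_half_int : exists l, 0 < l /\ is_RInt_gen (gi (/ 2)) (at_right 0) (Rbar_locally p_infty) l.
Proof.
  set (F := fun x => RInt f12 1 x).
  assert (Hmono : forall a b, 0 < a -> a <= b -> F a <= F b).
  { intros a b Ha Hab. unfold F. rewrite <- (chasles_f12 1 a b) by lra.
    assert (0 <= RInt f12 a b); [|lra].
    apply RInt_ge_0; auto. apply ex_f12; lra. intros; apply f12_nonneg. }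
  destruct (mono_lim_pinf F 1 1) as [Linf [HLinf HLinfb]].
  { intros a b Ha Hab. apply Hmono; lra. }
  { intros a Ha. unfold F. eapply Rle_trans; [|apply (int_exp_bound a Ha)].
    apply RInt_le; auto. apply ex_f12; lra.
    apply (@ex_RInt_continuous R_CompleteNormedModule). intros; apply expm_cont.
    intros x Hx. apply f12_le_exp. lra. }
  destruct (mono_lim_0 F 2) as [L0 [HL0 HL0b]].
  { intros a b Ha Hab _. apply Hmono; lra. }
  { intros a Ha Ha1. unfold F.
    assert (E := chasles_f12 1 a 1). rewrite RInt_point in E.
    assert (RInt f12 a 1 <= 2).
    { eapply Rle_trans; [|apply (int_pow_bound a Ha Ha1)].
      apply RInt_le; auto. apply ex_f12; lra.
      apply (@ex_RInt_continuous R_CompleteNormedModule). intros; apply Rpow_cont.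
      rewrite Rmin_left in H by lra. lra.
      intros x Hx. apply f12_le_pow. lra. }
    assert (E' : RInt f12 1 a = - RInt f12 a 1).
    { unfold zero in E; simpl in E. lra. }
    rewrite E'. lra. }
  exists (Linf - L0). split.
  - assert (F 2 <= Linf) by (apply HLinfb; lra).
    assert (L0 <= F 1) by (apply HL0b; lra).
    assert (F 1 = 0) by (unfold F; rewrite RInt_point; reflexivity).
    assert (0 < F 2).
    { unfold F. apply RInt_gt_0; [lra| |].
      - intros x Hx. unfold f12, gi, Rpower. apply Rmult_lt_0_compat; apply exp_pos.
      - intros x Hx. apply gi_cont. lra. }
    lra.
  - apply (gen_Derive_pos F f12); auto.
    + intros x Hx. apply is_derive_RInt with 1.
      * eapply filter_imp; [|apply (loc_pos x Hx)]. intros y Hy.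
        unfold F. apply (@RInt_correct R_CompleteNormedModule). apply ex_f12; lra.
      * apply gi_cont; auto.
    + intros; apply gi_cont; auto.
Qed.

Lemma Gamma_eq s l : is_RInt_gen (gi s) (at_right 0) (Rbar_locally p_infty) l -> Gamma s = l.
Proof.
  intro H. unfold Gamma. apply (is_RInt_gen_unique (gi s) l H).
Qed.

Lemma Gamma_nat k : Gamma (INR k + 1) = INR (fact k).
Proof.
  apply Gamma_eq. induction k as [|k IH].
  - simpl. replace (0 + 1) with 1 by ring. exact gi1_int.
  - rewrite S_INR. replace (INR (fact (S k))) with ((INR k + 1) * INR (fact k)).
    + apply gi_step; auto. pose proof (pos_INR k). lra.
    + rewrite fact_simpl, mult_INR, S_INR. ring.
Qed.

Lemma Gamma_half : exists l, 0 < l /\ forall k, Gamma (INR k + / 2) = poch (/ 2) k * l.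
Proof.
  destruct gamma_half_int as [l [Hl Hi]].
  exists l. split; auto. intro k. apply Gamma_eq.
  induction k as [|k IH].
  - simpl. replace (0 + / 2) with (/ 2) by ring. replace (1 * l) with l by ring. exact Hi.
  - rewrite S_INR. replace (INR k + 1 + / 2) with (INR k + / 2 + 1) by ring.
    replace (poch (/ 2) (S k) * l) with ((INR k + / 2) * (poch (/ 2) k * l)) by (simpl; ring).
    apply gi_step; auto. pose proof (pos_INR k). lra.
Qed.

Lemma poch_S a k : poch a (S k) = poch a k * (a + INR k).
Proof. reflexivity. Qed.

Lemma poch_split a i j : poch a (i + j) = poch a i * poch (a + INR i) j.
Proof.
  induction j as [|j IH].
  - rewrite Nat.add_0_r. simpl. ring.
  - rewrite Nat.add_succ_r, !poch_S, IH, plus_INR. ring.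
Qed.

Lemma poch_shiftl a k : poch a (S k) = a * poch (a + 1) k.
Proof.
  induction k as [|k IH].
  - simpl. ring.
  - rewrite poch_S, IH, poch_S, S_INR. ring.
Qed.

Lemma poch_dup a k : poch a k * poch (a + / 2) k * 4 ^ k = poch (2 * a) (2 * k).
Proof.
  induction k as [|k IH].
  - simpl. ring.
  - replace (2 * S k)%nat with (S (S (2 * k))) by lia.
    rewrite !poch_S, <- IH. rewrite !S_INR, mult_INR. simpl INR. simpl pow. field.
Qed.

Lemma poch_neg a k : poch (- a) k = (-1) ^ k * poch (a - INR k + 1) k.
Proof.
  induction k as [|k IH].
  - simpl. ring.
  - rewrite poch_S, IH, poch_shiftl. rewrite S_INR.
    replace (a - (INR k + 1) + 1 + 1) with (a - INR k + 1) by ring.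
    simpl pow. ring.
Qed.

Lemma poch_fact c j : poch (INR c + 1) j = INR (fact (c + j)) / INR (fact c).
Proof.
  induction j as [|j IH].
  - rewrite Nat.add_0_r. simpl. field. apply not_0_INR, fact_neq_0.
  - rewrite poch_S, IH, Nat.add_succ_r, fact_simpl, mult_INR, S_INR, plus_INR.
    field. apply not_0_INR, fact_neq_0.
Qed.

Lemma poch_pos a k : 0 < a -> 0 < poch a k.
Proof.
  intro H. induction k as [|k IH]; simpl; [lra|].
  apply Rmult_lt_0_compat; auto. pose proof (pos_INR k). lra.
Qed.

Lemma poch_zero a k j : (j < k)%nat -> a + INR j = 0 -> poch a k = 0.
Proof.
  intros Hj Ha. induction k as [|k IH]; [lia|].
  rewrite poch_S. destruct (Nat.eq_dec j k) as [->|Hne].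
  - rewrite Ha. ring.
  - rewrite IH by lia. ring.
Qed.

Lemma poch_nz a k : (forall j, (j < k)%nat -> a + INR j <> 0) -> poch a k <> 0.
Proof.
  induction k as [|k IH]; intro H; simpl; [lra|].
  apply Rmult_integral_contrapositive_currified; auto.
Qed.

Lemma INR2 : INR 2 = 2.
Proof. simpl. ring. Qed.

Definition hc (n m k : nat) := hyp43_coef (- INR m / 2) ((1 - INR m) / 2) ((1 - INR m) / 2) ((2 - INR m) / 2)
                (1 - INR m) (/ 2 - INR m - INR n) (INR n + 3 / 2) k.

Lemma hc_zero_gen n m k : ((m < 2 * k)%nat \/ ((1 <= m)%nat /\ m = (2 * k)%nat)) -> hc n m k = 0.
Proof.
  intros H. unfold hc, hyp43_coef.
  destruct (Nat.Even_or_Odd m) as [[p Hp]|[p Hp]].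
  - destruct (Nat.lt_ge_cases p k) as [Hpk|Hpk].
    + rewrite (poch_zero (- INR m / 2) k p Hpk). unfold Rdiv; ring.
      rewrite Hp, mult_INR, INR2. field.
    + assert (Hm : m = (2 * k)%nat) by lia. destruct k as [|q]; [lia|].
      rewrite (poch_zero ((2 - INR m) / 2) (S q) q); [| lia | rewrite Hm, mult_INR, INR2, S_INR; field].
      unfold Rdiv; ring.
  - assert (Hpk : (p < k)%nat) by lia.
    rewrite (poch_zero ((1 - INR m) / 2) k p Hpk). unfold Rdiv; ring.
    rewrite Hp, plus_INR, mult_INR, INR2. simpl INR. field.
Qed.

Lemma sum_ext (f g : nat -> R) N : (forall k, (k <= N)%nat -> f k = g k) -> sum_f_R0 f N = sum_f_R0 g N.
Proof.
  induction N as [|N IH]; intro H; simpl.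
  - apply H; lia.
  - rewrite IH by (intros; apply H; lia). rewrite H by lia. reflexivity.
Qed.

Lemma sum_extend (f : nat -> R) K0 K : (K0 <= K)%nat -> (forall k, (K0 < k)%nat -> f k = 0) ->
  sum_f_R0 f K = sum_f_R0 f K0.
Proof.
  intros HK Hz. induction HK as [|K HK IH]; auto.
  simpl. rewrite IH, Hz by lia. ring.
Qed.

Lemma sum_zero (f : nat -> R) K : (forall k, (k <= K)%nat -> f k = 0) -> sum_f_R0 f K = 0.
Proof.
  intro H. rewrite (sum_ext f (fun _ => 0)) by auto. clear H.
  induction K as [|K IH]; simpl; [auto|]. rewrite IH; ring.
Qed.

Lemma sum_plus' (f g : nat -> R) N : sum_f_R0 (fun k => f k + g k) N = sum_f_R0 f N + sum_f_R0 g N.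
Proof. induction N as [|N IH]; simpl; [|rewrite IH]; ring. Qed.

Lemma sum_scal' (f : nat -> R) c N : sum_f_R0 (fun k => c * f k) N = c * sum_f_R0 f N.
Proof. induction N as [|N IH]; simpl; [|rewrite IH]; ring. Qed.

Lemma sum_shift (f : nat -> R) N : sum_f_R0 f (S N) = f 0%nat + sum_f_R0 (fun i => f (S i)) N.
Proof.
  induction N as [|N IH].
  - simpl. ring.
  - change (sum_f_R0 f (S (S N))) with (sum_f_R0 f (S N) + f (S (S N))). rewrite IH.
    change (sum_f_R0 (fun i => f (S i)) (S N)) with (sum_f_R0 (fun i => f (S i)) N + f (S (S N))). ring.
Qed.

Definition Gr (n m : nat) := Gamma (INR m + INR n + / 2) / (Gamma (INR m + 1) * Gamma (INR n + 3 / 2)).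
Definition ac (n m k : nat) := Gr n m * 2 ^ m * hc n m k * 4 ^ k.
Definition Qs (n m : nat) (y : R) := sum_f_R0 (fun k => ac n m k * y ^ (m - 2 * k)) m.
Definition Qds (n m : nat) (y : R) := sum_f_R0 (fun k => ac n m k * INR (m - 2 * k) * y ^ (pred (m - 2 * k))) m.

Lemma RHS_Qs n m y : Gr n m * 2 ^ m * hyp_poly m n y = Qs n m y.
Proof.
  unfold hyp_poly, Qs.
  rewrite (sum_extend (fun k => ac n m k * y ^ (m - 2 * k)) (Nat.div2 m) m).
  - rewrite <- sum_scal'. apply sum_ext. intros k _. unfold ac, hc. ring.
  - pose proof (Nat.div2_odd m). destruct (Nat.odd m); simpl in H; lia.
  - intros k Hk. unfold ac. rewrite hc_zero_gen; [ring|].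
    left. pose proof (Nat.div2_odd m). destruct (Nat.odd m); simpl in H; lia.
Qed.

Lemma fact_nz k : INR (fact k) <> 0.
Proof. apply not_0_INR, fact_neq_0. Qed.

Lemma Gr_val n m : (1 <= m)%nat -> Gr n m = poch (INR n + 3 / 2) (m - 1) / INR (fact m).
Proof.
  intro Hm. destruct Gamma_half as [l [Hl HG]].
  unfold Gr. rewrite Gamma_nat.
  replace (INR m + INR n + / 2) with (INR (S n + (m - 1)) + / 2)
    by (rewrite plus_INR, S_INR, minus_INR by lia; simpl; ring).
  replace (INR n + 3 / 2) with (INR (S n) + / 2) by (rewrite S_INR; field).
  rewrite !HG, poch_split.
  replace (/ 2 + INR (S n)) with (INR n + 3 / 2) by (rewrite S_INR; field).
  replace (INR (S n) + / 2) with (INR n + 3 / 2) by (rewrite S_INR; field).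
  assert (0 < poch (/ 2) (S n)) by (apply poch_pos; lra).
  field. repeat split; first [apply fact_nz | apply Rgt_not_eq; lra | lra].
Qed.

Lemma Gr0 n : Gr n 0 = 2 / (2 * INR n + 1).
Proof.
  destruct Gamma_half as [l [Hl HG]].
  unfold Gr. replace (INR 0 + 1) with (INR 0 + 1) by ring. rewrite Gamma_nat.
  replace (INR 0 + INR n + / 2) with (INR n + / 2) by (simpl; ring).
  replace (INR n + 3 / 2) with (INR (S n) + / 2) by (rewrite S_INR; field).
  rewrite !HG, poch_S.
  assert (0 < poch (/ 2) n) by (apply poch_pos; lra).
  pose proof (pos_INR n). simpl fact. simpl INR.
  field. lra.
Qed.

Definition bb (n k r : nat) := 2 ^ (2 * k + 1 + r) * poch (INR n + INR k + 3 / 2) r * INR (fact (k + r))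
   / (4 ^ k * INR (fact k) * INR (fact (r + 1)) * INR (fact r)).

Lemma pow_m1_nz k : (-1) ^ k <> 0.
Proof. apply pow_nonzero. lra. Qed.

Lemma pow4_nz k : 4 ^ k <> 0.
Proof. apply pow_nonzero. lra. Qed.

Lemma ac_bb n k r : ac n (2 * k + 1 + r) k = bb n k r.
Proof.
  set (m := (2 * k + 1 + r)%nat).
  assert (Hm : INR m = 2 * INR k + 1 + INR r) by (unfold m; rewrite !plus_INR, mult_INR, INR2; simpl; ring).
  set (P1 := poch (- INR m / 2) k). set (P2 := poch ((1 - INR m) / 2) k). set (P3 := poch ((2 - INR m) / 2) k).
  set (Q1 := poch (1 - INR m) k). set (Q3 := poch (INR n + 3 / 2) k).
  set (X := poch (INR n + INR k + 3 / 2) r). set (Y := poch (INR n + INR k + INR r + 3 / 2) k).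
  assert (E1 : P1 * P2 * 4 ^ k = INR (fact m) / INR (fact (r + 1))).
  { unfold P1, P2. replace ((1 - INR m) / 2) with (- INR m / 2 + / 2) by field.
    rewrite poch_dup. replace (2 * (- INR m / 2)) with (- INR m) by field.
    rewrite poch_neg, pow_1_even.
    replace (INR m - INR (2 * k) + 1) with (INR (r + 1) + 1)
      by (rewrite Hm, mult_INR, INR2, plus_INR; simpl; ring).
    rewrite poch_fact. replace (r + 1 + 2 * k)%nat with m by (unfold m; lia). ring. }
  assert (E2 : P2 * P3 * 4 ^ k = Q1 * ((-1) ^ k * INR (fact (k + r)) / INR (fact r))).
  { unfold P2, P3, Q1. replace ((2 - INR m) / 2) with ((1 - INR m) / 2 + / 2) by field.
    rewrite poch_dup. replace (2 * ((1 - INR m) / 2)) with (1 - INR m) by field.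
    replace (2 * k)%nat with (k + k)%nat by lia. rewrite poch_split.
    f_equal.
    replace (1 - INR m + INR k) with (- (INR m - INR k - 1)) by ring.
    rewrite poch_neg.
    replace (INR m - INR k - 1 - INR k + 1) with (INR r + 1) by (rewrite Hm; ring).
    rewrite poch_fact. replace (r + k)%nat with (k + r)%nat by lia. field. apply fact_nz. }
  assert (E3 : poch (/ 2 - INR m - INR n) k = (-1) ^ k * Y).
  { replace (/ 2 - INR m - INR n) with (- (INR m + INR n - / 2)) by ring.
    rewrite poch_neg. unfold Y. f_equal. f_equal. rewrite Hm. field. }
  assert (E4 : Gr n m = Q3 * X * Y / INR (fact m)).
  { rewrite Gr_val by (unfold m; lia).
    replace (m - 1)%nat with (k + (r + k))%nat by (unfold m; lia).
    rewrite !poch_split. unfold Q3, X, Y.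
    replace (INR n + 3 / 2 + INR k) with (INR n + INR k + 3 / 2) by ring.
    replace (INR n + INR k + 3 / 2 + INR r) with (INR n + INR k + INR r + 3 / 2) by ring.
    unfold Rdiv. f_equal. symmetry. apply Rmult_assoc. }
  assert (HQ1 : Q1 <> 0).
  { unfold Q1. apply poch_nz. intros j Hj.
    assert (INR j + 1 < INR m).
    { rewrite <- S_INR. apply lt_INR. unfold m. lia. }
    lra. }
  assert (HQ3 : Q3 <> 0) by (unfold Q3; apply Rgt_not_eq, poch_pos; pose proof (pos_INR n); lra).
  assert (HY : Y <> 0) by (unfold Y; apply Rgt_not_eq, poch_pos; pose proof (pos_INR n); pose proof (pos_INR k); pose proof (pos_INR r); lra).
  assert (Enum : P1 * P2 * P2 * P3 = (INR (fact m) / INR (fact (r + 1))) * (Q1 * ((-1) ^ k * INR (fact (k + r)) / INR (fact r))) / (4 ^ k * 4 ^ k)).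
  { rewrite <- E1, <- E2. field. apply pow4_nz. }
  unfold ac, hc, hyp43_coef. fold P1 P2 P3 Q1 Q3. rewrite Enum, E3, E4.
  unfold bb. replace (2 * k + 1 + r)%nat with m by reflexivity.
  fold X. clearbody P1 P2 P3 Q1 Q3 X Y m. field. repeat split; auto using fact_nz, pow4_nz, pow_m1_nz.
Qed.

Lemma bb_nf n k r : bb n k r = 2 * 2 ^ r * poch (INR n + INR k + 3 / 2) r * INR (fact (k + r))
   / (INR (fact k) * INR (fact (r + 1)) * INR (fact r)).
Proof.
  unfold bb. rewrite !pow_add. replace (2 * k)%nat with (k + k)%nat by lia. rewrite pow_add.
  replace (4 ^ k) with (2 ^ k * 2 ^ k) by (rewrite <- Rpow_mult_distr; f_equal; ring).
  field. repeat split; try apply fact_nz; apply pow_nonzero; lra.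
Qed.

Lemma factS x : INR (fact (S x)) = (INR x + 1) * INR (fact x).
Proof. rewrite fact_simpl, mult_INR, S_INR. ring. Qed.

Lemma bb_0 n k : bb n k 0 = 2.
Proof.
  rewrite bb_nf. rewrite Nat.add_0_r. simpl pow. simpl poch.
  change (INR (fact (0 + 1))) with 1. change (INR (fact 0)) with 1.
  field. apply fact_nz.
Qed.

Lemma B1 n r : (INR r + 2) * bb n 0 (S r) = (2 * (INR n + 1 + INR r) + 1) * bb n 0 r.
Proof.
  rewrite !bb_nf. change (INR 0) with 0. change (INR (fact 0)) with 1. rewrite !Rplus_0_r.
  replace (S r + 1)%nat with (S (S r)) by lia. replace (r + 1)%nat with (S r) by lia.
  rewrite !Nat.add_0_l. rewrite poch_S.
  rewrite !factS. simpl pow. rewrite S_INR.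
  pose proof (pos_INR r).
  field. repeat split; try apply fact_nz; lra.
Qed.

Lemma B2 n k r : (INR r + 2) * (bb n (S k) (S r) - bb n k (S r)) =
  (2 * (INR n + 2 * INR (S k) + 1 + INR r) + 1) * bb n (S k) r.
Proof.
  rewrite !bb_nf.
  replace (S k + S r)%nat with (S (S (k + r))) by lia.
  replace (k + S r)%nat with (S (k + r)) by lia.
  replace (S k + r)%nat with (S (k + r)) by lia.
  replace (S r + 1)%nat with (S (S r)) by lia. replace (r + 1)%nat with (S r) by lia.
  rewrite poch_S, (poch_shiftl (INR n + INR k + 3 / 2)).
  replace (INR n + INR k + 3 / 2 + 1) with (INR n + INR (S k) + 3 / 2) by (rewrite S_INR; ring).
  rewrite !factS. simpl pow. rewrite !S_INR.
  pose proof (pos_INR r). pose proof (pos_INR k).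
  rewrite plus_INR. field. repeat split; try apply fact_nz; lra.
Qed.

Lemma ac_zero n m k : ((m < 2 * k)%nat \/ ((1 <= m)%nat /\ m = (2 * k)%nat)) -> ac n m k = 0.
Proof. intro H. unfold ac. rewrite hc_zero_gen by auto. ring. Qed.

Lemma ac_bb' n m k r : m = (2 * k + 1 + r)%nat -> ac n m k = bb n k r.
Proof. intros ->. apply ac_bb. Qed.

Lemma pt n j k y :
  ac n (S (S j)) k * INR (S (S j) - 2 * k) * y ^ (pred (S (S j) - 2 * k)) =
  (match k with O => 0 | S k' => ac n j k' * INR (j - 2 * k') * y ^ (pred (j - 2 * k')) end)
  + (2 * INR (n + S j) + 1) * (ac n (S j) k * y ^ (S j - 2 * k)).
Proof.
  destruct k as [|k].
  - rewrite Nat.mul_0_r, !Nat.sub_0_r. simpl pred.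
    rewrite (ac_bb' n (S (S j)) 0 (S j)) by lia. rewrite (ac_bb' n (S j) 0 j) by lia.
    assert (E := B1 n j). rewrite plus_INR, !S_INR.
    replace (INR j + 1 + 1) with (INR j + 2) by ring.
    replace ((2 * (INR n + (INR j + 1)) + 1) * (bb n 0 j * y ^ S j))
       with ((2 * (INR n + 1 + INR j) + 1) * bb n 0 j * y ^ S j) by ring.
    rewrite <- E. ring.
  - replace (S (S j) - 2 * S k)%nat with (j - 2 * k)%nat by lia.
    replace (S j - 2 * S k)%nat with (pred (j - 2 * k)) by lia.
    destruct (Nat.lt_ge_cases (S j) (2 * S k)) as [Hlt|Hge].
    + rewrite (ac_zero n (S j) (S k)) by lia.
      replace (j - 2 * k)%nat with 0%nat by lia. simpl INR. ring.
    + destruct (Nat.eq_dec (S j) (2 * S k)) as [Heq|Hne].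
      * rewrite (ac_zero n (S j) (S k)) by lia.
        rewrite (ac_bb' n (S (S j)) (S k) 0) by lia. rewrite (ac_bb' n j k 0) by lia.
        rewrite !bb_0. ring.
      * set (r := (S j - 2 * S k - 1)%nat).
        rewrite (ac_bb' n (S (S j)) (S k) (S r)) by (unfold r; lia).
        rewrite (ac_bb' n j k (S r)) by (unfold r; lia).
        rewrite (ac_bb' n (S j) (S k) r) by (unfold r; lia).
        replace (INR (j - 2 * k)) with (INR r + 2) by (rewrite <- INR2, <- plus_INR; f_equal; unfold r; lia).
        replace (2 * INR (n + S j) + 1) with (2 * (INR n + 2 * INR (S k) + 1 + INR r) + 1).
        2:{ assert (HSj : INR (S j) = 2 * INR (S k) + 1 + INR r).
            { replace (S j) with (2 * S k + 1 + r)%nat by (unfold r; lia).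
              rewrite !plus_INR, mult_INR, INR2. simpl INR. ring. }
            rewrite plus_INR, HSj. ring. }
        assert (E := B2 n k r).
        replace ((2 * (INR n + 2 * INR (S k) + 1 + INR r) + 1) * (bb n (S k) r * y ^ pred (j - 2 * k)))
          with ((2 * (INR n + 2 * INR (S k) + 1 + INR r) + 1) * bb n (S k) r * y ^ pred (j - 2 * k)) by ring.
        rewrite <- E. ring.
Qed.

Lemma Qs0 n y : Qs n 0 y = 2 / (2 * INR n + 1).
Proof.
  unfold Qs, ac, hc, hyp43_coef. simpl sum_f_R0. rewrite Gr0. simpl poch. simpl pow.
  change (INR (fact 0)) with 1. field. pose proof (pos_INR n). lra.
Qed.

Lemma Qs1 n y : Qs n 1 y = 2 * y.
Proof.
  unfold Qs. simpl sum_f_R0.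
  rewrite (ac_zero n 1 1) by lia. rewrite (ac_bb' n 1 0 0) by lia. rewrite bb_0.
  simpl. ring.
Qed.

Lemma Qsz n j : Qs n (S (S j)) 0 = 0.
Proof.
  unfold Qs. apply sum_zero. intros k Hk.
  destruct (Nat.lt_ge_cases (2 * k) (S (S j))) as [H|H].
  - rewrite pow_i by lia. ring.
  - rewrite ac_zero by lia. ring.
Qed.

Lemma sum_derive (c : nat -> R) (e : nat -> nat) K y :
  is_derive (fun y => sum_f_R0 (fun k => c k * y ^ e k) K) y
            (sum_f_R0 (fun k => c k * INR (e k) * y ^ pred (e k)) K).
Proof.
  induction K as [|K IH].
  - simpl. auto_derive; auto. ring.
  - simpl. apply (is_derive_plus (fun y => sum_f_R0 (fun k => c k * y ^ e k) K) (fun y => c (S K) * y ^ e (S K))).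
    + exact IH.
    + auto_derive; auto. ring.
Qed.

Lemma Qs_derive n m y : is_derive (Qs n m) y (Qds n m y).
Proof. unfold Qs, Qds. apply (sum_derive (ac n m) (fun k => (m - 2 * k)%nat)). Qed.

Lemma Qds_rec n j y : Qds n (S (S j)) y = Qds n j y + (2 * INR (n + S j) + 1) * Qs n (S j) y.
Proof.
  unfold Qds, Qs.
  set (T2 := fun k => match k with O => 0 | S k' => ac n j k' * INR (j - 2 * k') * y ^ (pred (j - 2 * k')) end).
  assert (HA : sum_f_R0 (fun k => ac n j k * INR (j - 2 * k) * y ^ pred (j - 2 * k)) j
               = sum_f_R0 T2 (S (S j))).
  { rewrite sum_shift. unfold T2 at 1.
    rewrite (sum_extend (fun i => T2 (S i)) j (S j)); [| lia |].
    - simpl. ring_simplify. apply sum_ext. intros; reflexivity.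
    - intros k Hk. unfold T2. rewrite ac_zero by lia. ring. }
  assert (HB : sum_f_R0 (fun k => ac n (S j) k * y ^ (S j - 2 * k)) (S j)
               = sum_f_R0 (fun k => ac n (S j) k * y ^ (S j - 2 * k)) (S (S j))).
  { symmetry. apply sum_extend; [lia|]. intros k Hk. rewrite ac_zero by lia. ring. }
  rewrite HA, HB, <- sum_scal', <- sum_plus'.
  apply sum_ext. intros k _. rewrite pt. unfold T2. reflexivity.
Qed.


Theorem theorem5 (m n : nat) (y : R) :
  Rmn m n y =
  Gamma (INR m + INR n + / 2) / (Gamma (INR m + 1) * Gamma (INR n + 3 / 2))
  * 2 ^ m * hyp_poly m n y.
Proof.
  change (Gamma (INR m + INR n + / 2) / (Gamma (INR m + 1) * Gamma (INR n + 3 / 2)))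
    with (Gr n m).
  rewrite RHS_Qs.
  apply (main_ind (fun m => Qs n m) (fun m => Qds n m) n).
  - intros; apply Qs_derive.
  - intros; apply Qs0.
  - intros; apply Qs1.
  - intros; apply Qds_rec.
  - intros; apply Qsz.
Qed.
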